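(* Each of the following classes has superSAP (with respect to its binary relation) and the joint embedding property; moreover, in each case the class of finite members has a Fraïssé limit, provided the index sets $F$ and $G$ below are finite. (1) The classes of (a) partially ordered sets, (b) preordered sets, (c) undirected graphs (sets with a symmetric antireflexive binary relation), (d) directed graphs (sets with an antireflexive binary relation), (e) sets with an equivalence relation, (f) sets with a transitive binary relation, (g) sets with a symmetric reflexive binary relation (a tolerance), in each case even after adding an $F$-indexed family of unary operations $f$ that are relation-preserving ($x\,R\,y \Rightarrow f(x)\,R\,f(y)$) and a $G$-indexed family of unary operations $g$ that are relation-reversing ($x\,R\,y \Rightarrow g(y)\,R\,g(x)$). (2) The class of partially ordered sets with further families of order preserving, order reversing, strict order preserving and strict order reversing unary operations.
   Context: A function $f$ on a poset is strict order preserving if $a<b$ implies $f(a)<f(b)$, and strict order reversing if $a<b$ implies $f(b)<f(a)$, where $a<b$ means $a\le b$ and $a\ne b$. All classes are closed under isomorphism. For a triple $\mathbf{A},\mathbf{B},\mathbf{C}$ in the class with $\mathbf{C}\subseteq\mathbf{A}$, $\mathbf{C}\subseteq\mathbf{B}$ and $C=A\cap B$, SAP asks for $\mathbf{D}$ in the class with $\mathbf{A},\mathbf{B}\subseteq\mathbf{D}$; superSAP with respect to $R$ further requires that for $a\in A\setminus B$, $b\in B\setminus A$: if $a\,R_{\mathbf{D}}\,b$ then $a\,R_{\mathbf{A}}\,c\,R_{\mathbf{B}}\,b$ for some $c\in C$, and if $b\,R_{\mathbf{D}}\,a$ then $b\,R_{\mathbf{B}}\,c\,R_{\mathbf{A}}\,a$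 for some $c\in C$. The joint embedding property (JEP): for all $\mathbf{A},\mathbf{B}$ in the class there are $\mathbf{D}$ in the class and embeddings of $\mathbf{A}$ and $\mathbf{B}$ into $\mathbf{D}$. A Fraïssé limit of a class of finitely generated structures in a countable language is a countable ultrahomogeneous structure whose age is that class. *)

(* Defs.v *)
From Stdlib Require Import List.
Import ListNotations.
Set Implicit Arguments.

Record struct (I : Type) := Struct {
  carrier :> Type;
  rel : carrier -> carrier -> Prop;
  op : I -> carrier -> carrier }.
Arguments rel {I} s _ _.
Arguments op {I} s _ _.

Definition embedding {I} {A B : struct I} (h : A -> B) : Prop :=
  (forall x y, h x = h y -> x = y) /\
  (forall x y, rel A x y <-> rel B (h x) (h y)) /\
  (forall i x, h (op A i x) = op B i (h x)).

Definition isomorphism {I} {A B : struct I} (h : A -> B) : Prop :=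
  embedding h /\ (forall y, exists x, h x = y).

(** superSAP w.r.t. [rel], with C ⊆ A, C ⊆ B, A ∩ B = C, A,B ⊆ D rendered
    via embeddings; the disjointness clause expresses A ∩ B = C inside D. *)
Definition superSAP {I} (K : struct I -> Prop) : Prop :=
  forall (A B C : struct I) (eA : C -> A) (eB : C -> B),
    K A -> K B -> K C -> embedding eA -> embedding eB ->
    exists (D : struct I) (hA : A -> D) (hB : B -> D),
      K D /\ embedding hA /\ embedding hB /\
      (forall c, hA (eA c) = hB (eB c)) /\
      (forall a b, hA a = hB b -> exists c, eA c = a /\ eB c = b) /\
      (forall a b, (forall c, eA c <> a) -> (forall c, eB c <> b) ->
         rel D (hA a) (hB b) -> exists c, rel A a (eA c) /\ rel B (eB c) b) /\
      (forall a b, (forall c, eA c <> a) -> (forall c, eB c <> b) ->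
         rel D (hB b) (hA a) -> exists c, rel B b (eB c) /\ rel A (eA c) a).

Definition JEP {I} (K : struct I -> Prop) : Prop :=
  forall A B : struct I, K A -> K B ->
    exists (D : struct I) (f : A -> D) (g : B -> D),
      K D /\ embedding f /\ embedding g.

Definition finite_type (T : Type) : Prop := exists l : list T, forall x, In x l.
Definition countable_type (T : Type) : Prop :=
  exists f : T -> nat, forall x y, f x = f y -> x = y.

Definition op_closed {I} {M : struct I} (S : M -> Prop) : Prop :=
  forall i x, S x -> S (op M i x).

Definition generated {I} {M : struct I} (l : list M) (x : M) : Prop :=
  forall S, op_closed S -> (forall y, In y l -> S y) -> S x.

Lemma generated_closed {I} {M : struct I} (l : list M) :
  op_closed (generated l).
Proof. intros i x Hx S HS Hl. apply HS. exact (Hx S HS Hl). Defined.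

Definition gen_struct {I} {M : struct I} (l : list M) : struct I :=
  {| carrier := { x : M | generated l x };
     rel := fun x y => rel M (proj1_sig x) (proj1_sig y);
     op := fun i x => exist _ (op M i (proj1_sig x))
                        (@generated_closed I M l i _ (proj2_sig x)) |}.

Definition ultrahomogeneous {I} (M : struct I) : Prop :=
  forall (l1 l2 : list M) (phi : gen_struct l1 -> gen_struct l2),
    isomorphism phi ->
    exists sigma : M -> M, isomorphism sigma /\
      forall x, sigma (proj1_sig x) = proj1_sig (phi x).

Definition age_is {I} (M : struct I) (K : struct I -> Prop) : Prop :=
  (forall l : list M, exists A, K A /\ exists h : gen_struct l -> A, isomorphism h) /\
  (forall A, K A -> exists h : A -> M, embedding h).

Definition fraisse_limit {I} (K : struct I -> Prop) (M : struct I) : Prop :=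
  countable_type M /\ ultrahomogeneous M /\ age_is M K.

Definition finite_members {I} (K : struct I -> Prop) (A : struct I) : Prop :=
  K A /\ finite_type A.

Inductive relkind := Poset | Preorder | Graph | Digraph | Equivalence
                   | TransRel | Tolerance.

Definition rel_axioms (k : relkind) (T : Type) (R : T -> T -> Prop) : Prop :=
  match k with
  | Poset => (forall x, R x x) /\ (forall x y, R x y -> R y x -> x = y) /\
             (forall x y z, R x y -> R y z -> R x z)
  | Preorder => (forall x, R x x) /\ (forall x y z, R x y -> R y z -> R x z)
  | Graph => (forall x y, R x y -> R y x) /\ (forall x, ~ R x x)
  | Digraph => forall x, ~ R x x
  | Equivalence => (forall x, R x x) /\ (forall x y, R x y -> R y x) /\
             (forall x y z, R x y -> R y z -> R x z)
  | TransRel => forall x y z, R x y -> R y z -> R x z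
  | Tolerance => (forall x y, R x y -> R y x) /\ (forall x, R x x)
  end.

Definition class1 (k : relkind) (F G : Type) (A : struct (F + G)) : Prop :=
  rel_axioms k (rel A) /\
  (forall f x y, rel A x y -> rel A (op A (inl f) x) (op A (inl f) y)) /\
  (forall g x y, rel A x y -> rel A (op A (inr g) y) (op A (inr g) x)).

Definition strict {T} (R : T -> T -> Prop) (x y : T) : Prop := R x y /\ x <> y.

Definition class2 (F1 F2 F3 F4 : Type) (A : struct (((F1 + F2) + F3) + F4)) : Prop :=
  rel_axioms Poset (rel A) /\
  (forall f x y, rel A x y -> rel A (op A (inl (inl (inl f))) x) (op A (inl (inl (inl f))) y)) /\
  (forall f x y, rel A x y -> rel A (op A (inl (inl (inr f))) y) (op A (inl (inl (inr f))) x)) /\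
  (forall f x y, strict (rel A) x y ->
     strict (rel A) (op A (inl (inr f)) x) (op A (inl (inr f)) y)) /\
  (forall f x y, strict (rel A) x y ->
     strict (rel A) (op A (inr f) y) (op A (inr f) x)).
Arguments class1 k F G A : clear implicits.
Arguments class2 F1 F2 F3 F4 A : clear implicits.

(* Main.v *)
Require Import Defs.
From Stdlib Require Import List Bool Classical ClassicalEpsilon ProofIrrelevance Lia Arith Cantor.
Import ListNotations.
Set Implicit Arguments.

Definition EM := excluded_middle_informative.
Definition choose {X : Type} {P : X -> Prop} (H : exists x, P x) : X :=
  proj1_sig (constructive_indefinite_description P H).
Lemma choose_spec {X : Type} {P : X -> Prop} (H : exists x, P x) : P (choose H).
Proof. unfold choose. exact (proj2_sig _). Qed.

Section Amalg.
Variable I : Type.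
Variables A B C : struct I.
Variable eA : C -> A.
Variable eB : C -> B.
Hypothesis HeA : embedding eA.
Hypothesis HeB : embedding eB.
Variable mode : bool.

Lemma eA_inj x y : eA x = eA y -> x = y. Proof. apply (proj1 HeA). Qed.
Lemma eB_inj x y : eB x = eB y -> x = y. Proof. apply (proj1 HeB). Qed.
Lemma eA_rel x y : rel C x y <-> rel A (eA x) (eA y). Proof. apply (proj1 (proj2 HeA)). Qed.
Lemma eB_rel x y : rel C x y <-> rel B (eB x) (eB y). Proof. apply (proj1 (proj2 HeB)). Qed.
Lemma eA_op i x : eA (op C i x) = op A i (eA x). Proof. apply (proj2 (proj2 HeA)). Qed.
Lemma eB_op i x : eB (op C i x) = op B i (eB x). Proof. apply (proj2 (proj2 HeB)). Qed.
Lemma relAB c1 c2 : rel A (eA c1) (eA c2) <-> rel B (eB c1) (eB c2).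
Proof. rewrite <- eA_rel, <- eB_rel. tauto. Qed.

Definition newB := {b : carrier B | forall c, eB c <> b}.
Definition Dc : Type := (carrier A + newB)%type.
Definition hA (a : A) : Dc := inl a.
Definition hB (b : B) : Dc :=
  match EM (exists c, eB c = b) with
  | left H => inl (eA (choose H))
  | right H => inr (exist _ b (fun c E => H (ex_intro _ c E)))
  end.

Lemma hB_eB c : hB (eB c) = hA (eA c).
Proof.
  unfold hB. destruct (EM _) as [H|H].
  - unfold hA. f_equal. f_equal. apply eB_inj. exact (choose_spec H).
  - exfalso; apply H; eauto.
Qed.

Lemma hB_new b (p : forall c, eB c <> b) : hB b = inr (exist _ b p).
Proof.
  unfold hB. destruct (EM _) as [[c H]|H].
  - exfalso; exact (p c H).
  - f_equal. f_equal. apply proof_irrelevance.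
Qed.

Lemma hAB a b : hA a = hB b -> exists c, eA c = a /\ eB c = b.
Proof.
  intro E. destruct (classic (exists c, eB c = b)) as [[c Hc]|H].
  - exists c. split; auto. subst b. rewrite hB_eB in E. unfold hA in E.
    injection E; auto.
  - assert (p : forall c, eB c <> b) by (intros c E'; apply H; eauto).
    rewrite (hB_new p) in E. discriminate.
Qed.

Lemma hA_inj x y : hA x = hA y -> x = y.
Proof. unfold hA; intro E; injection E; auto. Qed.

Lemma hB_inj x y : hB x = hB y -> x = y.
Proof.
  intro E.
  destruct (classic (exists c, eB c = x)) as [[c1 H1]|H1];
  destruct (classic (exists c, eB c = y)) as [[c2 H2]|H2].
  - subst. rewrite !hB_eB in E. apply hA_inj, eA_inj in E. subst; auto.
  - assert (p : forall c, eB c <> y) by (intros c E'; apply H2; eauto).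
    subst x. rewrite hB_eB, (hB_new p) in E. discriminate.
  - assert (p : forall c, eB c <> x) by (intros c E'; apply H1; eauto).
    subst y. rewrite hB_eB, (hB_new p) in E. discriminate.
  - assert (p : forall c, eB c <> x) by (intros c E'; apply H1; eauto).
    assert (q : forall c, eB c <> y) by (intros c E'; apply H2; eauto).
    rewrite (hB_new p), (hB_new q) in E.
    apply (f_equal (fun u : Dc => match u with inr s => proj1_sig s | inl _ => x end)) in E.
    exact E.
Qed.

Lemma D_cases (u : Dc) : (exists a, u = hA a) \/ (exists b, u = hB b).
Proof.
  destruct u as [a|[b p]].
  - left; exists a; reflexivity.
  - right; exists b; rewrite (hB_new p); reflexivity.
Qed.

Definition Dop (i : I) (u : Dc) : Dc :=
  match u with inl a => inl (op A i a) | inr b => hB (op B i (proj1_sig b)) end.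

Lemma hA_op i a : Dop i (hA a) = hA (op A i a).
Proof. reflexivity. Qed.

Lemma hB_op i b : Dop i (hB b) = hB (op B i b).
Proof.
  destruct (classic (exists c, eB c = b)) as [[c H]|H].
  - subst b. rewrite hB_eB. unfold hA; simpl.
    rewrite <- eA_op, <- eB_op, hB_eB. reflexivity.
  - assert (p : forall c, eB c <> b) by (intros c E'; apply H; eauto).
    rewrite (hB_new p). reflexivity.
Qed.

Definition Drel (u v : Dc) : Prop :=
  (exists x y, u = hA x /\ v = hA y /\ rel A x y) \/
  (exists x y, u = hB x /\ v = hB y /\ rel B x y) \/
  (mode = true /\
   ((exists x c y, u = hA x /\ v = hB y /\ rel A x (eA c) /\ rel B (eB c) y) \/
    (exists y c x, u = hB y /\ v = hA x /\ rel B y (eB c) /\ rel A (eA c) x))).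

Definition D : struct I := {| carrier := Dc; rel := Drel; op := Dop |}.

Lemma D_ind (S : Dc -> Dc -> Prop) :
  (forall x y, rel A x y -> S (hA x) (hA y)) ->
  (forall x y, rel B x y -> S (hB x) (hB y)) ->
  (mode = true -> forall u v w, S u v -> S v w -> S u w) ->
  forall u v, Drel u v -> S u v.
Proof.
  intros HA HB HT u v [[x [y [-> [-> H]]]]|[[x [y [-> [-> H]]]]|[Hm [[x [c [y [-> [-> [H1 H2]]]]]]|[y [c [x [-> [-> [H1 H2]]]]]]]]]].
  - auto.
  - auto.
  - apply (HT Hm _ (hA (eA c))). auto. rewrite <- hB_eB. auto.
  - apply (HT Hm _ (hB (eB c))). auto. rewrite hB_eB. auto.
Qed.

Hypothesis HtA : mode = true -> forall x y z, rel A x y -> rel A y z -> rel A x z.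
Hypothesis HtB : mode = true -> forall x y z, rel B x y -> rel B y z -> rel B x z.

Lemma hA_rel x y : Drel (hA x) (hA y) <-> rel A x y.
Proof.
  split.
  2:{ intro H; left; eauto 6. }
  intros [[x1 [y1 [E1 [E2 H]]]]|[[x1 [y1 [E1 [E2 H]]]]|[Hm [[x1 [c [y1 [E1 [E2 [H1 H2]]]]]]|[y1 [c [x1 [E1 [E2 [H1 H2]]]]]]]]]].
  - apply hA_inj in E1, E2; subst; auto.
  - apply hAB in E1 as [c1 [<- <-]]. apply hAB in E2 as [c2 [<- <-]].
    apply relAB; auto.
  - apply hA_inj in E1; subst x1. apply hAB in E2 as [c2 [<- <-]].
    apply (HtA Hm _ _ _ H1). apply relAB; auto.
  - apply hA_inj in E2; subst x1. apply hAB in E1 as [c1 [<- <-]].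
    apply (HtA Hm _ (eA c)); auto. apply relAB; auto.
Qed.

Lemma hB_rel x y : Drel (hB x) (hB y) <-> rel B x y.
Proof.
  split.
  2:{ intro H; right; left; eauto 6. }
  intros [[x1 [y1 [E1 [E2 H]]]]|[[x1 [y1 [E1 [E2 H]]]]|[Hm [[x1 [c [y1 [E1 [E2 [H1 H2]]]]]]|[y1 [c [x1 [E1 [E2 [H1 H2]]]]]]]]]].
  - symmetry in E1, E2. apply hAB in E1 as [c1 [<- <-]]. apply hAB in E2 as [c2 [<- <-]].
    apply relAB; auto.
  - apply hB_inj in E1, E2; subst; auto.
  - apply hB_inj in E2; subst y1. symmetry in E1. apply hAB in E1 as [c1 [<- <-]].
    apply (HtB Hm _ (eB c)); auto. apply relAB; auto.
  - apply hB_inj in E1; subst y1. symmetry in E2. apply hAB in E2 as [c2 [<- <-]].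
    apply (HtB Hm _ _ _ H1). apply relAB; auto.
Qed.


Lemma cross1 a b : (forall c, eA c <> a) -> (forall c, eB c <> b) ->
  Drel (hA a) (hB b) -> exists c, rel A a (eA c) /\ rel B (eB c) b.
Proof.
  intros Na Nb [[x1 [y1 [E1 [E2 H]]]]|[[x1 [y1 [E1 [E2 H]]]]|[Hm [[x1 [c [y1 [E1 [E2 [H1 H2]]]]]]|[y1 [c [x1 [E1 [E2 [H1 H2]]]]]]]]]].
  - symmetry in E2. apply hAB in E2 as [c [_ E]]. exfalso; exact (Nb c E).
  - apply hAB in E1 as [c [E _]]. exfalso; exact (Na c E).
  - apply hA_inj in E1. apply hB_inj in E2. subst. eauto.
  - apply hAB in E1 as [c' [E _]]. exfalso; exact (Na c' E).
Qed.

Lemma cross2 a b : (forall c, eA c <> a) -> (forall c, eB c <> b) ->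
  Drel (hB b) (hA a) -> exists c, rel B b (eB c) /\ rel A (eA c) a.
Proof.
  intros Na Nb [[x1 [y1 [E1 [E2 H]]]]|[[x1 [y1 [E1 [E2 H]]]]|[Hm [[x1 [c [y1 [E1 [E2 [H1 H2]]]]]]|[y1 [c [x1 [E1 [E2 [H1 H2]]]]]]]]]].
  - symmetry in E1. apply hAB in E1 as [c [_ E]]. exfalso; exact (Nb c E).
  - apply hAB in E2 as [c [E _]]. exfalso; exact (Na c E).
  - symmetry in E1. apply hAB in E1 as [c' [_ E]]. exfalso; exact (Nb c' E).
  - apply hA_inj in E2. apply hB_inj in E1. subst. eauto.
Qed.

Lemma hA_emb : @embedding I A D hA.
Proof.
  split; [|split].
  - apply hA_inj.
  - intros x y; simpl; rewrite hA_rel; tauto.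
  - intros i x; reflexivity.
Qed.

Lemma hB_emb : @embedding I B D hB.
Proof.
  split; [|split].
  - apply hB_inj.
  - intros x y; simpl; rewrite hB_rel; tauto.
  - intros i x; simpl; rewrite hB_op; reflexivity.
Qed.

Lemma D_refl : (forall x, rel A x x) -> (forall x, rel B x x) -> forall u, Drel u u.
Proof.
  intros HA HB u. destruct (D_cases u) as [[a ->]|[b ->]].
  - apply hA_rel; auto.
  - apply hB_rel; auto.
Qed.

Lemma D_irrefl : mode = false -> (forall x, ~ rel A x x) -> (forall x, ~ rel B x x) ->
  forall u, ~ Drel u u.
Proof.
  intros Hm HA HB u H.
  assert (S : forall u v, Drel u v -> u <> v).
  { apply (D_ind (fun u v => u <> v)).
    - intros x y Hr E. apply hA_inj in E; subst. exact (HA _ Hr).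
    - intros x y Hr E. apply hB_inj in E; subst. exact (HB _ Hr).
    - intros Hm'; rewrite Hm in Hm'; discriminate. }
  exact (S u u H eq_refl).
Qed.

Lemma D_trans : mode = true -> forall u v w, Drel u v -> Drel v w -> Drel u w.
Proof.
  intros Hm.
  assert (S : forall u v, Drel u v -> forall w, Drel v w -> Drel u w).
  2:{ intros u v w H1 H2; exact (S u v H1 w H2). }
  apply (D_ind (fun u v => forall w, Drel v w -> Drel u w)); [| |intros _ u v w H1 H2 w' H3; auto].
  - intros x y Hxy w
      [[x1 [y1 [E1 [E2 H]]]]|[[x1 [y1 [E1 [E2 H]]]]|[_ [[x1 [c [y1 [E1 [E2 [H1 H2]]]]]]|[y1 [c [x1 [E1 [E2 [H1 H2]]]]]]]]]]; subst w.
    + apply hA_inj in E1; subst. apply hA_rel; eauto.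
    + apply hAB in E1 as [c [<- <-]]. right; right; split; auto. left.
      exists x, c, y1; auto.
    + apply hA_inj in E1; subst. right; right; split; auto. left.
      exists x, c, y1; repeat split; eauto.
    + apply hAB in E1 as [c1 [<- <-]]. apply hA_rel; auto.
      apply (HtA Hm _ (eA c)); auto. apply (HtA Hm _ (eA c1)); auto. apply relAB; auto.
  - intros x y Hxy w
      [[x1 [y1 [E1 [E2 H]]]]|[[x1 [y1 [E1 [E2 H]]]]|[_ [[x1 [c [y1 [E1 [E2 [H1 H2]]]]]]|[y1 [c [x1 [E1 [E2 [H1 H2]]]]]]]]]]; subst w.
    + symmetry in E1. apply hAB in E1 as [c [<- <-]]. right; right; split; auto. right.
      exists x, c, y1; auto.
    + apply hB_inj in E1; subst. apply hB_rel; eauto.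
    + symmetry in E1. apply hAB in E1 as [c1 [<- <-]]. apply hB_rel; auto.
      apply (HtB Hm _ (eB c)); auto. apply (HtB Hm _ (eB c1)); auto. apply relAB; auto.
    + apply hB_inj in E1; subst. right; right; split; auto. right.
      exists x, c, x1; repeat split; eauto.
Qed.

Lemma D_sym : (mode = true -> forall u v w, Drel u v -> Drel v w -> Drel u w) ->
  (forall x y, rel A x y -> rel A y x) -> (forall x y, rel B x y -> rel B y x) ->
  forall u v, Drel u v -> Drel v u.
Proof.
  intros HT HA HB. apply (D_ind (fun u v => Drel v u)).
  - intros x y H; apply hA_rel; auto.
  - intros x y H; apply hB_rel; auto.
  - intros Hm u v w H1 H2. eauto.
Qed.

Lemma D_antisym : mode = true ->
  (forall x y, rel A x y -> rel A y x -> x = y) -> (forall x y, rel B x y -> rel B y x -> x = y) ->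
  forall u v, Drel u v -> Drel v u -> u = v.
Proof.
  intros Hm HA HB.
  assert (S : forall u v, Drel u v -> Drel u v /\ (Drel v u -> u = v)).
  2:{ intros u v H1 H2. apply (S u v H1); auto. }
  apply (D_ind (fun u v => Drel u v /\ (Drel v u -> u = v))).
  - intros x y H; split. apply hA_rel; auto. intro H'; apply hA_rel in H'. f_equal; auto.
  - intros x y H; split. apply hB_rel; auto. intro H'; apply hB_rel in H'. f_equal; auto.
  - intros _ u v w [H1 H1'] [H2 H2']. split. eapply D_trans; eauto.
    intro H3. assert (u = v) by (apply H1'; eapply D_trans; eauto). subst v.
    apply H2'. auto.
Qed.

Lemma D_pres i : (forall x y, rel A x y -> rel A (op A i x) (op A i y)) ->
  (forall x y, rel B x y -> rel B (op B i x) (op B i y)) ->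
  forall u v, Drel u v -> Drel (Dop i u) (Dop i v).
Proof.
  intros HA HB. apply (D_ind (fun u v => Drel (Dop i u) (Dop i v))).
  - intros x y H. rewrite !hA_op. apply hA_rel; auto.
  - intros x y H. rewrite !hB_op. apply hB_rel; auto.
  - intros Hm u v w; apply D_trans; auto.
Qed.

Lemma D_rev i : (forall x y, rel A x y -> rel A (op A i y) (op A i x)) ->
  (forall x y, rel B x y -> rel B (op B i y) (op B i x)) ->
  forall u v, Drel u v -> Drel (Dop i v) (Dop i u).
Proof.
  intros HA HB. apply (D_ind (fun u v => Drel (Dop i v) (Dop i u))).
  - intros x y H. rewrite !hA_op. apply hA_rel; auto.
  - intros x y H. rewrite !hB_op. apply hB_rel; auto.
  - intros Hm u v w H1 H2; eapply D_trans; eauto.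
Qed.

Lemma D_spres i : mode = true ->
  (forall x y, rel A x y -> rel A y x -> x = y) -> (forall x y, rel B x y -> rel B y x -> x = y) ->
  (forall x y, strict (rel A) x y -> strict (rel A) (op A i x) (op A i y)) ->
  (forall x y, strict (rel B) x y -> strict (rel B) (op B i x) (op B i y)) ->
  forall u v, strict Drel u v -> strict Drel (Dop i u) (Dop i v).
Proof.
  intros Hm HaA HaB HA HB.
  assert (S : forall u v, Drel u v -> u = v \/ strict Drel (Dop i u) (Dop i v)).
  2:{ intros u v [H1 H2]. destruct (S u v H1); [contradiction|auto]. }
  apply (D_ind (fun u v => u = v \/ strict Drel (Dop i u) (Dop i v))).
  - intros x y H. destruct (classic (x = y)) as [->|Ne]; [left; auto|right].
    destruct (HA x y (conj H Ne)) as [H1 H2]. rewrite !hA_op. split.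
    apply hA_rel; auto. intro E; apply hA_inj in E; auto.
  - intros x y H. destruct (classic (x = y)) as [->|Ne]; [left; auto|right].
    destruct (HB x y (conj H Ne)) as [H1 H2]. rewrite !hB_op. split.
    apply hB_rel; auto. intro E; apply hB_inj in E; auto.
  - intros _ u v w [->|[H1 N1]] [->|[H2 N2]]; auto.
    + right; split; auto.
    + right; split; auto.
    + right; split. eapply D_trans; eauto.
      intro E. rewrite E in H1. apply N2. apply (D_antisym Hm HaA HaB); auto.
Qed.

Lemma D_srev i : mode = true ->
  (forall x y, rel A x y -> rel A y x -> x = y) -> (forall x y, rel B x y -> rel B y x -> x = y) ->
  (forall x y, strict (rel A) x y -> strict (rel A) (op A i y) (op A i x)) ->
  (forall x y, strict (rel B) x y -> strict (rel B) (op B i y) (op B i x)) ->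
  forall u v, strict Drel u v -> strict Drel (Dop i v) (Dop i u).
Proof.
  intros Hm HaA HaB HA HB.
  assert (S : forall u v, Drel u v -> u = v \/ strict Drel (Dop i v) (Dop i u)).
  2:{ intros u v [H1 H2]. destruct (S u v H1); [contradiction|auto]. }
  apply (D_ind (fun u v => u = v \/ strict Drel (Dop i v) (Dop i u))).
  - intros x y H. destruct (classic (x = y)) as [->|Ne]; [left; auto|right].
    destruct (HA x y (conj H Ne)) as [H1 H2]. rewrite !hA_op. split.
    apply hA_rel; auto. intro E; apply hA_inj in E; auto.
  - intros x y H. destruct (classic (x = y)) as [->|Ne]; [left; auto|right].
    destruct (HB x y (conj H Ne)) as [H1 H2]. rewrite !hB_op. split.
    apply hB_rel; auto. intro E; apply hB_inj in E; auto.
  - intros _ u v w [->|[H1 N1]] [->|[H2 N2]]; auto.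
    + right; split; auto.
    + right; split; auto.
    + right; split. eapply D_trans; eauto.
      intro E. rewrite E in H2. apply N1. apply (D_antisym Hm HaA HaB); auto.
Qed.

Lemma D_finite : finite_type A -> finite_type B -> finite_type Dc.
Proof.
  intros [LA HLA] [LB HLB].
  exists (map hA LA ++ flat_map (fun b => match EM (forall c, eB c <> b) with
           | left p => [inr (exist _ b p) : Dc] | right _ => [] end) LB).
  intros [a|[b p]].
  - apply in_or_app; left. apply in_map; auto.
  - apply in_or_app; right. apply in_flat_map. exists b; split; auto.
    destruct (EM _) as [p'|n]. + left. f_equal. f_equal. apply proof_irrelevance.
    + contradiction.
Qed.

End Amalg.

Arguments D {I A B C} eA eB mode.
Arguments hA {I A B C} eB a.
Arguments hB {I A B C} eA eB b.
Arguments Dc {I A B C} eB.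
Arguments D_finite {I A B C} eB _ _.

Section Classes.
Variable I : Type.
Variable K0 : struct I -> Prop.
Variable modef : bool.
Hypothesis Ktrans : forall A, K0 A -> modef = true -> forall x y z, rel A x y -> rel A y z -> rel A x z.
Hypothesis KD : forall (A B C : struct I) (eA : C -> A) (eB : C -> B), embedding eA -> embedding eB ->
  K0 A -> K0 B -> K0 (D eA eB modef).

Lemma superSAP_of : superSAP K0.
Proof.
  intros A B C eA eB KA KB KC HeA HeB.
  exists (D eA eB modef), (hA eB), (hB eA eB).
  split; [apply KD; auto|].
  split; [apply (@hA_emb _ _ _ _ eA eB HeA HeB modef); auto; apply Ktrans; auto|].
  split; [apply (@hB_emb _ _ _ _ eA eB HeA HeB modef); auto; apply Ktrans; auto|].
  split; [intro c; symmetry; apply hB_eB; auto|].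
  split; [intros a b E; apply hAB in E; auto|].
  split.
  - intros a b Na Nb H. apply (@cross1 _ _ _ _ eA eB HeA HeB modef); auto; apply Ktrans; auto.
  - intros a b Na Nb H. apply (@cross2 _ _ _ _ eA eB HeA HeB modef); auto; apply Ktrans; auto.
Qed.

Definition emptyS : struct I := {| carrier := Empty_set; rel := fun _ _ => False; op := fun _ x => x |}.
Hypothesis Kempty : K0 emptyS.

Lemma JEP_of : JEP K0.
Proof.
  intros A B KA KB.
  pose (eA := fun x : emptyS => match x return carrier A with end).
  pose (eB := fun x : emptyS => match x return carrier B with end).
  assert (HeA : embedding eA) by (split; [|split]; intros; destruct x).
  assert (HeB : embedding eB) by (split; [|split]; intros; destruct x).
  destruct (superSAP_of KA KB Kempty HeA HeB) as [Dd [f [g [H1 [H2 [H3 _]]]]]].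
  exists Dd, f, g; auto.
Qed.

Lemma AP_of : forall (A B C : struct I) (eA : C -> A) (eB : C -> B),
  K0 A -> K0 B -> embedding eA -> embedding eB -> finite_type A -> finite_type B ->
  exists (Dd : struct I) (f : A -> Dd) (g : B -> Dd),
    K0 Dd /\ finite_type Dd /\ embedding f /\ embedding g /\ forall c, f (eA c) = g (eB c).
Proof.
  intros A B C eA eB KA KB HeA HeB FA FB.
  exists (D eA eB modef), (hA eB), (hB eA eB).
  split; [apply KD; auto|].
  split; [apply (D_finite eB); auto|].
  split; [apply (@hA_emb _ _ _ _ eA eB HeA HeB modef); auto; apply Ktrans; auto|].
  split; [apply (@hB_emb _ _ _ _ eA eB HeA HeB modef); auto; apply Ktrans; auto|].
  intro c; symmetry; apply hB_eB; auto.
Qed.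


End Classes.

Definition mode_of (k : relkind) : bool :=
  match k with Poset | Preorder | Equivalence | TransRel => true | _ => false end.

Lemma class1_trans k F G (A : struct (F + G)) : class1 k F G A -> mode_of k = true ->
  forall x y z, rel A x y -> rel A y z -> rel A x z.
Proof.
  intros [H _] Hm. destruct k; simpl in *; try discriminate; firstorder.
Qed.

Lemma class1_D k F G : forall (A B C : struct (F + G)) (eA : C -> A) (eB : C -> B),
  embedding eA -> embedding eB ->
  class1 k F G A -> class1 k F G B -> class1 k F G (D eA eB (mode_of k)).
Proof.
  intros A B C eA eB HeA HeB KA KB.
  pose proof (class1_trans KA) as TA. pose proof (class1_trans KB) as TB.
  destruct KA as [RA [FA GA]]. destruct KB as [RB [FB GB]].
  split; [|split].
  - destruct k; simpl in *.
    + destruct RA as [? [? ?]]; destruct RB as [? [? ?]].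
      split; [apply D_refl; auto|split; [apply D_antisym; auto|apply D_trans; auto]].
    + destruct RA as [? ?]; destruct RB as [? ?].
      split; [apply D_refl; auto|apply D_trans; auto].
    + destruct RA as [? ?]; destruct RB as [? ?].
      split; [apply D_sym; auto|apply D_irrefl; auto].
      intros Hm; discriminate.
    + apply D_irrefl; auto.
    + destruct RA as [? [? ?]]; destruct RB as [? [? ?]].
      split; [apply D_refl; auto|split; [apply D_sym; auto|apply D_trans; auto]].
      intros; eapply D_trans; eauto.
    + apply D_trans; auto.
    + destruct RA as [? ?]; destruct RB as [? ?].
      split; [apply D_sym; auto|apply D_refl; auto].
      intros Hm; discriminate.
  - intros f. apply D_pres; auto.
  - intros g. apply D_rev; auto.
Qed.

Lemma class2_D F1 F2 F3 F4 : forall (A B C : struct (((F1 + F2) + F3) + F4)) (eA : C -> A) (eB : C -> B),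
  embedding eA -> embedding eB ->
  class2 F1 F2 F3 F4 A -> class2 F1 F2 F3 F4 B -> class2 F1 F2 F3 F4 (D eA eB true).
Proof.
  intros A B C eA eB HeA HeB KA KB.
  destruct KA as [[RA [AA TA]] [P1A [P2A [P3A P4A]]]].
  destruct KB as [[RB [AB TB]] [P1B [P2B [P3B P4B]]]].
  assert (TA' : true = true -> forall x y z, rel A x y -> rel A y z -> rel A x z) by auto.
  assert (TB' : true = true -> forall x y z, rel B x y -> rel B y z -> rel B x z) by auto.
  split; [split; [|split]|split; [|split; [|split]]].
  - apply D_refl; auto.
  - apply D_antisym; auto.
  - apply D_trans; auto.
  - intros f. apply D_pres; auto.
  - intros f. apply D_rev; auto.
  - intros f. apply D_spres; auto.
  - intros f. apply D_srev; auto.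
Qed.

Lemma class1_empty k F G : class1 k F G (emptyS (F + G)).
Proof.
  unfold class1; destruct k; simpl; repeat split; repeat intro;
  match goal with x : Empty_set |- _ => destruct x end.
Qed.

Lemma class2_empty F1 F2 F3 F4 : class2 F1 F2 F3 F4 (emptyS _).
Proof.
  unfold class2; simpl; repeat split; repeat intro;
  match goal with x : Empty_set |- _ => destruct x end.
Qed.

Lemma part_superSAP_JEP :
  (forall (k : relkind) (F G : Type), superSAP (class1 k F G) /\ JEP (class1 k F G)) /\
  (forall F1 F2 F3 F4 : Type, superSAP (class2 F1 F2 F3 F4) /\ JEP (class2 F1 F2 F3 F4)).
Proof.
  split.
  - intros k F G. split.
    + apply (@superSAP_of _ _ (mode_of k)). intros A KA; apply class1_trans; auto.
      intros; apply class1_D; auto.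
    + apply (@JEP_of _ _ (mode_of k)). intros A KA; apply class1_trans; auto.
      intros; apply class1_D; auto. apply class1_empty.
  - intros F1 F2 F3 F4. split.
    + apply (@superSAP_of _ _ true). intros A [[_ [_ T]] _] _; exact T.
      intros; apply class2_D; auto.
    + apply (@JEP_of _ _ true). intros A [[_ [_ T]] _] _; exact T.
      intros; apply class2_D; auto. apply class2_empty.
Qed.

Definition surj (X : Type) := exists g : nat -> X, forall x, exists n, g n = x.

Lemma surj_nat : surj nat.
Proof. exists (fun n => n). eauto. Qed.

Lemma surj_prod X Y : surj X -> surj Y -> surj (X * Y).
Proof.
  intros [gx Hx] [gy Hy].
  exists (fun n => let (a, b) := of_nat n in (gx a, gy b)).
  intros [x y]. destruct (Hx x) as [a <-]. destruct (Hy y) as [b <-].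
  exists (to_nat (a, b)). rewrite cancel_of_to. reflexivity.
Qed.

Fixpoint decL {X : Type} (g : nat -> X) (fuel n : nat) : list X :=
  match fuel with
  | 0 => []
  | S f => match n with
           | 0 => []
           | S m => let (a, b) := of_nat m in g a :: decL g f b
           end
  end.

Lemma surj_list X : surj X -> surj (list X).
Proof.
  intros [g Hg].
  exists (fun k => let (f, n) := of_nat k in decL g f n).
  assert (H : forall l, exists f n, decL g f n = l).
  { induction l as [|x l [f [n IH]]].
    - exists 0, 0; reflexivity.
    - destruct (Hg x) as [a <-]. exists (S f), (S (to_nat (a, n))).
      assert (E : decL g (S f) (S (to_nat (a, n))) =
                  (let (a', b) := of_nat (to_nat (a, n)) in g a' :: decL g f b)) by reflexivity.
      rewrite E, cancel_of_to, IH. reflexivity. }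
  intro l. destruct (H l) as [f [n E]]. exists (to_nat (f, n)). rewrite cancel_of_to. exact E.
Qed.

Definition Task : Type := (list nat * list nat * list (nat * nat) * list (nat * nat * nat))%type.

Lemma surj_Task : surj Task.
Proof.
  unfold Task. repeat apply surj_prod; repeat apply surj_list; repeat apply surj_prod; apply surj_nat.
Qed.

Definition lookup (k x : nat) (OT : list (nat * nat * nat)) : nat :=
  match find (fun t => match t with (a, b, _) => Nat.eqb a k && Nat.eqb b x end) OT with
  | Some (_, _, z) => z
  | None => x
  end.

Lemma lookup_spec (k x z : nat) (OT : list (nat * nat * nat)) :
  In (k, x, z) OT -> (forall z', In (k, x, z') OT -> z' = z) -> lookup k x OT = z.
Proof.
  intros Hin Huniq. unfold lookup.
  destruct (find _ OT) as [[[a b] z']|] eqn:E.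
  - apply find_some in E as [Hin' Ht]. apply andb_prop in Ht as [H1 H2].
    apply Nat.eqb_eq in H1, H2. subst. apply Huniq; auto.
  - exfalso. apply (find_none _ _ E) in Hin. rewrite !Nat.eqb_refl in Hin. discriminate.
Qed.

Lemma sig_eq (P : nat -> Prop) (x y : {n | P n}) : proj1_sig x = proj1_sig y -> x = y.
Proof.
  destruct x as [x p], y as [y q]; simpl; intros ->. f_equal. apply proof_irrelevance.
Qed.

Lemma sig_eqT (X : Type) (P : X -> Prop) (x y : {n | P n}) : proj1_sig x = proj1_sig y -> x = y.
Proof.
  destruct x as [x p], y as [y q]; simpl; intros ->. f_equal. apply proof_irrelevance.
Qed.

Lemma fin_inj (X : Type) (g : X -> nat) (L : list nat) :
  (forall x y, g x = g y -> x = y) -> (forall x, In (g x) L) -> finite_type X.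
Proof.
  intros Hinj HL.
  exists (flat_map (fun n => match EM (exists x, g x = n) with
                            | left H => [choose H] | right _ => [] end) L).
  intro x. apply in_flat_map. exists (g x). split; auto.
  destruct (EM _) as [H|H].
  - left. apply Hinj. exact (choose_spec H).
  - exfalso; eauto.
Qed.

Fixpoint findex {X : Type} (d : X) (L : list X) : nat :=
  match L with
  | [] => 0
  | y :: L' => if EM (d = y) then 0 else S (findex d L')
  end.

Lemma findex_inj {X : Type} (L : list X) d1 d2 :
  In d1 L -> In d2 L -> findex d1 L = findex d2 L -> d1 = d2.
Proof.
  induction L as [|y L IH]; simpl; [tauto|].
  intros H1 H2. destruct (EM (d1 = y)) as [E1|E1]; destruct (EM (d2 = y)) as [E2|E2].
  - congruence.
  - discriminate.
  - discriminate.
  - intro E; injection E; intro E'. apply IH; auto.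
    destruct H1; [congruence|auto]. destruct H2; [congruence|auto].
Qed.

Lemma bound_ex (L : list nat) : exists b, forall x, In x L -> x < b.
Proof.
  induction L as [|a L [b Hb]]; simpl.
  - exists 0; tauto.
  - exists (S (a + b)). intros x [->|H]; [lia|]. specialize (Hb x H); lia.
Qed.

Lemma emb_comp {I : Type} (A B C : struct I) (f : A -> B) (g : B -> C) :
  embedding f -> embedding g -> embedding (fun x => g (f x)).
Proof.
  intros [f1 [f2 f3]] [g1 [g2 g3]]. split; [|split].
  - intros x y E; apply f1, g1, E.
  - intros x y. rewrite f2, g2. tauto.
  - intros i x. rewrite f3, g3. reflexivity.
Qed.

Lemma iso_inv {I : Type} (A B : struct I) (f : A -> B) :
  isomorphism f -> exists g : B -> A, embedding g /\ (forall y, f (g y) = y) /\ (forall x, g (f x) = x).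
Proof.
  intros [[f1 [f2 f3]] fs].
  exists (fun y => choose (fs y)).
  assert (E : forall y, f (choose (fs y)) = y) by (intro y; exact (choose_spec (fs y))).
  assert (E2 : forall x, choose (fs (f x)) = x) by (intro x; apply f1; rewrite E; auto).
  split; [split; [|split]|split; auto].
  - intros x y H. rewrite <- (E x), <- (E y), H. reflexivity.
  - intros x y. rewrite f2, !E. tauto.
  - intros i y. apply f1. rewrite E, f3, E. reflexivity.
Qed.

Section Fraisse.
Variable I : Type.
Variable K0 : struct I -> Prop.
Hypothesis I_fin : finite_type I.
Hypothesis K_emb : forall (A B : struct I) (h : A -> B), embedding h -> K0 B -> K0 A.
Hypothesis K_AP : forall (A B C : struct I) (eA : C -> A) (eB : C -> B),
  K0 A -> K0 B -> embedding eA -> embedding eB -> finite_type A -> finite_type B ->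
  exists (Dd : struct I) (f : A -> Dd) (g : B -> Dd),
    K0 Dd /\ finite_type Dd /\ embedding f /\ embedding g /\ forall c, f (eA c) = g (eB c).
Hypothesis K_empty : K0 (emptyS I).

Record cs := CS { cU : nat -> Prop; cR : nat -> nat -> Prop; cf : I -> nat -> nat }.
Definition closed (c : cs) := forall i x, cU c x -> cU c (cf c i x).
Definition cfin (c : cs) := exists L, forall x, cU c x -> In x L.
Definition TS (c : cs) : struct I :=
  {| carrier := {x | cU c x};
     rel := fun x y => cR c (proj1_sig x) (proj1_sig y);
     op := fun i x => match EM (cU c (cf c i (proj1_sig x))) with
                      | left p => exist _ _ p | right _ => x end |}.

Lemma TS_op c : closed c -> forall i (x : TS c), proj1_sig (op (TS c) i x) = cf c i (proj1_sig x).
Proof.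
  intros Hc i x. simpl. destruct (EM _) as [p|n]; [reflexivity|].
  exfalso; apply n, Hc, (proj2_sig x).
Qed.

Lemma TS_fin c : cfin c -> finite_type (TS c).
Proof.
  intros [L HL]. apply (fin_inj (fun x : TS c => proj1_sig x) L).
  - intros x y; apply sig_eq.
  - intro x; apply HL, (proj2_sig x).
Qed.

Definition ext (c c' : cs) :=
  (forall x, cU c x -> cU c' x) /\
  (forall x y, cU c x -> cU c y -> (cR c x y <-> cR c' x y)) /\
  (forall i x, cU c x -> cf c' i x = cf c i x).

Lemma ext_refl c : ext c c.
Proof. split; [|split]; auto; tauto. Qed.

Lemma ext_trans c1 c2 c3 : ext c1 c2 -> ext c2 c3 -> ext c1 c3.
Proof.
  intros [u1 [r1 f1]] [u2 [r2 f2]]. split; [|split]; auto.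
  - intros x y Hx Hy. rewrite r1, r2; auto; tauto.
  - intros i x Hx. rewrite f2, f1; auto.
Qed.

Section Recode.
Variable c : cs.
Variable Dd : struct I.
Variable h : TS c -> Dd.
Variable b : nat.
Hypothesis Hc : closed c.
Hypothesis Hh : embedding h.
Hypothesis Hb : forall x, cU c x -> x < b.
Variable LD : list Dd.
Hypothesis HLD : forall d, In d LD.

Definition j0 (d : Dd) : nat :=
  match EM (exists x, h x = d) with
  | left H => proj1_sig (choose H)
  | right _ => b + findex d LD
  end.

Lemma j0_h x : j0 (h x) = proj1_sig x.
Proof.
  unfold j0. destruct (EM _) as [H|H].
  - f_equal. apply (proj1 Hh). exact (choose_spec H).
  - exfalso; eauto.
Qed.

Lemma j0_inj d1 d2 : j0 d1 = j0 d2 -> d1 = d2.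
Proof.
  destruct (classic (exists x, h x = d1)) as [[x1 <-]|N1];
  destruct (classic (exists x, h x = d2)) as [[x2 <-]|N2].
  - rewrite !j0_h. intro E. f_equal. apply sig_eq, E.
  - rewrite j0_h. unfold j0. destruct (EM _); [contradiction|].
    pose proof (Hb _ (proj2_sig x1)). lia.
  - rewrite j0_h. unfold j0. destruct (EM _); [contradiction|].
    pose proof (Hb _ (proj2_sig x2)). lia.
  - unfold j0. destruct (EM _); [contradiction|]. destruct (EM _); [contradiction|].
    intro E. apply findex_inj with LD; auto. lia.
Qed.

Definition c' : cs :=
  CS (fun n => exists d, j0 d = n)
     (fun n m => exists d1 d2, j0 d1 = n /\ j0 d2 = m /\ rel Dd d1 d2)
     (fun i n => match EM (exists d, j0 d = n) with
                 | left H => j0 (op Dd i (choose H)) | right _ => n end).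

Lemma c'_f i d : cf c' i (j0 d) = j0 (op Dd i d).
Proof.
  simpl. destruct (EM _) as [H|H].
  - f_equal. f_equal. apply j0_inj. exact (choose_spec H).
  - exfalso; eauto.
Qed.

Lemma c'_R d1 d2 : cR c' (j0 d1) (j0 d2) <-> rel Dd d1 d2.
Proof.
  simpl. split.
  - intros [e1 [e2 [E1 [E2 H]]]]. apply j0_inj in E1, E2. subst; auto.
  - intro H; eauto.
Qed.

Lemma c'_closed : closed c'.
Proof. intros i n [d <-]. rewrite c'_f. exists (op Dd i d). reflexivity. Qed.

Lemma c'_fin : cfin c'.
Proof. exists (map j0 LD). intros n [d <-]. apply in_map, HLD. Qed.

Lemma c'_ext : ext c c'.
Proof.
  split; [|split].
  - intros x Hx. exists (h (exist _ x Hx)). rewrite j0_h. reflexivity.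
  - intros x y Hx Hy. pose proof (j0_h (exist _ x Hx)) as E1.
    pose proof (j0_h (exist _ y Hy)) as E2. simpl in E1, E2.
    transitivity (rel Dd (h (exist _ x Hx)) (h (exist _ y Hy))).
    + rewrite <- (proj1 (proj2 Hh)). simpl. tauto.
    + rewrite <- c'_R, E1, E2. tauto.
  - intros i x Hx. pose proof (j0_h (exist _ x Hx)) as E1. simpl in E1.
    rewrite <- E1 at 1. rewrite c'_f.
    rewrite <- (proj2 (proj2 Hh)), j0_h. rewrite TS_op; auto.
Qed.

Definition jj (d : Dd) : TS c' := exist _ (j0 d) (ex_intro _ d eq_refl).

Lemma jj_iso : isomorphism jj.
Proof.
  split; [split; [|split]|].
  - intros x y E. apply j0_inj. exact (f_equal (@proj1_sig _ _) E).
  - intros x y. change (rel Dd x y <-> cR c' (j0 x) (j0 y)). rewrite c'_R. tauto.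
  - intros i x. apply sig_eq. rewrite TS_op by apply c'_closed. simpl proj1_sig.
    rewrite c'_f. reflexivity.
  - intros [n [d E]]. exists d. apply sig_eq. simpl. exact E.
Qed.

Lemma jj_h x : proj1_sig (jj (h x)) = proj1_sig x.
Proof. simpl. apply j0_h. Qed.

End Recode.

Lemma recode (c : cs) (Dd : struct I) (h : TS c -> Dd) (b : nat) :
  closed c -> finite_type Dd -> embedding h -> (forall x, cU c x -> x < b) ->
  exists (c2 : cs) (j : Dd -> TS c2), closed c2 /\ cfin c2 /\ ext c c2 /\ isomorphism j /\
    (forall x, proj1_sig (j (h x)) = proj1_sig x).
Proof.
  intros Hc [LD HLD] Hh Hb.
  exists (c' Dd h b LD), (jj Dd h b LD).
  split; [exact (c'_closed Hh Hb HLD)|].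
  split; [exact (c'_fin Dd h b LD HLD)|].
  split; [exact (c'_ext Hc Hh Hb LD HLD)|].
  split; [exact (jj_iso Hh Hb LD HLD)|].
  intro x; exact (jj_h b Hh LD x).
Qed.


Definition LI : list I := choose I_fin.
Lemma HLI : forall i, In i LI.
Proof. exact (choose_spec I_fin). Qed.
Definition idx (i : I) : nat := findex i LI.
Lemma idx_inj i1 i2 : idx i1 = idx i2 -> i1 = i2.
Proof. apply findex_inj; apply HLI. Qed.

Definition interp (t : Task) : cs :=
  let '(Sl, V, RP, OT) := t in
  CS (fun x => In x V) (fun x y => In (x, y) RP) (fun i x => lookup (idx i) x OT).
Definition Tsl (t : Task) : list nat := let '(Sl, _, _, _) := t in Sl.

Lemma encode (c : cs) (Sl LV : list nat) : (forall x, cU c x <-> In x LV) ->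
  exists t : Task, Tsl t = Sl /\ (forall x, cU (interp t) x <-> cU c x) /\
    (forall x y, cU c x -> cU c y -> (cR (interp t) x y <-> cR c x y)) /\
    (forall i x, cU c x -> cf (interp t) i x = cf c i x).
Proof.
  intros HV.
  exists (Sl, LV, filter (fun p => if EM (cR c (fst p) (snd p)) then true else false) (list_prod LV LV),
          flat_map (fun i => map (fun x => (idx i, x, cf c i x)) LV) LI).
  split; [reflexivity|]. split; [|split].
  - intro x; simpl; rewrite HV; tauto.
  - intros x y Hx Hy; simpl. rewrite filter_In, in_prod_iff. simpl.
    destruct (EM (cR c x y)) as [H|H].
    + split; auto. intros _; split; auto. split; apply HV; auto.
    + split; [intros [_ E]; discriminate|tauto].
  - intros i x Hx; simpl. apply lookup_spec.
    + apply in_flat_map. exists i. split; [apply HLI|]. apply in_map_iff.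
      exists x; split; auto. apply HV; auto.
    + intros z' Hz. apply in_flat_map in Hz as [i' [_ Hz]]. apply in_map_iff in Hz as [x' [E _]].
      injection E; intros E1 E2 E3. apply idx_inj in E3. subst. reflexivity.
Qed.

Lemma ext_emb (c1 c2 : cs) : closed c1 -> ext c1 c2 ->
  exists h : TS c1 -> TS c2, embedding h /\ forall x, proj1_sig (h x) = proj1_sig x.
Proof.
  intros Hc [HU [HR HF]].
  exists (fun x => exist _ (proj1_sig x) (HU _ (proj2_sig x))).
  split; [split; [|split]|reflexivity].
  - intros x y E. apply sig_eq. exact (f_equal (@proj1_sig _ _) E).
  - intros x y. simpl. apply HR; apply proj2_sig.
  - intros i x. apply sig_eq.
    change (proj1_sig (op (TS c1) i x) = proj1_sig (op (TS c2) i (exist _ (proj1_sig x) (HU _ (proj2_sig x))))).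
    rewrite (TS_op Hc). simpl.
    destruct (EM _) as [p|n]; simpl.
    + symmetry; apply HF, proj2_sig.
    + exfalso; apply n. rewrite HF by apply proj2_sig. apply HU, Hc, proj2_sig.
Qed.

Definition inv (c : cs) := closed c /\ cfin c /\ K0 (TS c).

Definition valid (c : cs) (t : Task) :=
  inv c /\ closed (interp t) /\ cfin (interp t) /\ K0 (TS (interp t)) /\
  (forall x, In x (Tsl t) -> cU c x /\ cU (interp t) x) /\
  (forall i x, In x (Tsl t) -> In (cf (interp t) i x) (Tsl t) /\ cf (interp t) i x = cf c i x) /\
  (forall x y, In x (Tsl t) -> In y (Tsl t) -> (cR (interp t) x y <-> cR c x y)).

Definition realizes (c : cs) (t : Task) :=
  exists h : TS (interp t) -> TS c, embedding h /\
    forall x, In (proj1_sig x) (Tsl t) -> proj1_sig (h x) = proj1_sig x.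

Lemma step_ex c t : valid c t -> exists c2, inv c2 /\ ext c c2 /\ realizes c2 t.
Proof.
  intros [[Hc [Hfin HK]] [HBc [HBfin [HBK [HS [HSf HSr]]]]]].
  set (B := interp t) in *. set (Sl := Tsl t) in *.
  pose (cC := CS (fun x => In x Sl) (cR c) (cf c)).
  assert (HCc : closed cC).
  { intros i x Hx. simpl in *. destruct (HSf i x Hx) as [H1 H2]. rewrite <- H2. exact H1. }
  pose (eP := (fun x : TS cC => exist (cU c) (proj1_sig x) (proj1 (HS _ (proj2_sig x)))) : TS cC -> TS c).
  pose (eB := (fun x : TS cC => exist (cU B) (proj1_sig x) (proj2 (HS _ (proj2_sig x)))) : TS cC -> TS B).
  assert (HeP : embedding eP).
  { split; [|split].
    - intros x y E. apply sig_eq. exact (f_equal (@proj1_sig _ _) E).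
    - intros x y. simpl. tauto.
    - intros i x. apply sig_eq.
      change (proj1_sig (op (TS cC) i x) = proj1_sig (op (TS c) i (eP x))).
      rewrite (TS_op HCc), (TS_op Hc). reflexivity. }
  assert (HeB : embedding eB).
  { split; [|split].
    - intros x y E. apply sig_eq. exact (f_equal (@proj1_sig _ _) E).
    - intros x y. simpl. rewrite HSr; [tauto|apply proj2_sig|apply proj2_sig].
    - intros i x. apply sig_eq.
      change (proj1_sig (op (TS cC) i x) = proj1_sig (op (TS B) i (eB x))).
      rewrite (TS_op HCc), (TS_op HBc). simpl. symmetry. apply HSf, proj2_sig. }
  destruct (K_AP HK HBK HeP HeB (TS_fin Hfin) (TS_fin HBfin)) as [Dd [f [g [HKD [HDfin [Hf [Hg Hcomm]]]]]]].
  destruct Hfin as [Lc HLc]. destruct (bound_ex Lc) as [b Hb].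
  destruct (@recode c Dd f b Hc HDfin Hf) as [c2 [j [Hc2 [Hc2fin [Hext [Hj Hjf]]]]]].
  { intros x Hx; apply Hb, HLc, Hx. }
  exists c2. split; [|split; auto].
  - split; [|split]; auto.
    destruct (iso_inv Hj) as [g' [Hg' _]]. exact (K_emb Hg' HKD).
  - exists (fun x => j (g x)). split.
    + apply emb_comp; auto. apply Hj.
    + intros x Hx. pose (y := exist (fun n => In n Sl) (proj1_sig x) Hx : TS cC).
      assert (E : eB y = x) by (apply sig_eq; reflexivity).
      rewrite <- E, <- Hcomm, Hjf. reflexivity.
Qed.

Definition tsk : nat -> Task := choose surj_Task.
Lemma Htsk : forall t, exists n, tsk n = t.
Proof. exact (choose_spec surj_Task). Qed.

Definition step (c : cs) (t : Task) : cs :=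
  match EM (valid c t) with
  | left H => choose (step_ex H)
  | right _ => c
  end.

Definition cs0 : cs := CS (fun _ => False) (fun _ _ => False) (fun _ x => x).

Lemma inv_cs0 : inv cs0.
Proof.
  split; [|split].
  - intros i x [].
  - exists []; intros x [].
  - assert (H : embedding (fun x : TS cs0 => (match proj2_sig x with end : carrier (emptyS I)))).
    { split; [|split]; intros; destruct (proj2_sig x). }
    exact (K_emb H K_empty).
Qed.

Fixpoint stage (s : nat) : cs :=
  match s with
  | 0 => cs0
  | S s' => step (stage s') (tsk (fst (of_nat s')))
  end.

Lemma step_inv c t : inv c -> inv (step c t) /\ ext c (step c t).
Proof.
  intros Hc. unfold step. destruct (EM _) as [H|H].
  - destruct (choose_spec (step_ex H)) as [H1 [H2 _]]. auto.
  - split; auto. apply ext_refl.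
Qed.

Lemma step_real c t : valid c t -> realizes (step c t) t.
Proof.
  intros Hv. unfold step. destruct (EM _) as [H|H]; [|contradiction].
  exact (proj2 (proj2 (choose_spec (step_ex H)))).
Qed.

Lemma stage_inv s : inv (stage s).
Proof.
  induction s; simpl. apply inv_cs0. apply step_inv; auto.
Qed.

Lemma stage_ext s s' : s <= s' -> ext (stage s) (stage s').
Proof.
  induction 1. apply ext_refl. eapply ext_trans; eauto. simpl. apply step_inv, stage_inv.
Qed.

Lemma valid_mono c c2 t : valid c t -> inv c2 -> ext c c2 -> valid c2 t.
Proof.
  intros [Hc [H1 [H2 [H3 [HS [HSf HSr]]]]]] Hc2 [HU [HR HF]].
  split; auto. split; auto. split; auto. split; auto. split; [|split].
  - intros x Hx. destruct (HS x Hx); auto.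
  - intros i x Hx. destruct (HSf i x Hx) as [E1 E2]. split; auto.
    rewrite HF; auto. apply HS; auto.
  - intros x y Hx Hy. rewrite HSr, HR; auto; try tauto; apply HS; auto.
Qed.

Definition inM (n : nat) : Prop := exists s, cU (stage s) n.
Definition Mc : Type := {n | inM n}.
Definition Mst (x : Mc) : nat := choose (proj2_sig x).
Lemma Mst_spec (x : Mc) : cU (stage (Mst x)) (proj1_sig x).
Proof. exact (choose_spec (proj2_sig x)). Qed.

Definition Mop (i : I) (x : Mc) : Mc :=
  exist _ (cf (stage (Mst x)) i (proj1_sig x))
          (ex_intro _ (Mst x) (proj1 (stage_inv (Mst x)) i _ (Mst_spec x))).
Definition Mrel (x y : Mc) : Prop :=
  exists s, cU (stage s) (proj1_sig x) /\ cU (stage s) (proj1_sig y) /\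
            cR (stage s) (proj1_sig x) (proj1_sig y).
Definition M : struct I := {| carrier := Mc; rel := Mrel; op := Mop |}.

Lemma U_mono s s' x : s <= s' -> cU (stage s) x -> cU (stage s') x.
Proof. intros H; apply (stage_ext H). Qed.

Lemma cf_stage s s' i x : cU (stage s) x -> cU (stage s') x -> cf (stage s) i x = cf (stage s') i x.
Proof.
  intros H1 H2.
  destruct (stage_ext (Nat.le_max_l s s')) as [_ [_ F1]].
  destruct (stage_ext (Nat.le_max_r s s')) as [_ [_ F2]].
  rewrite <- (F1 i x H1), <- (F2 i x H2). reflexivity.
Qed.

Lemma cR_stage s s' x y : cU (stage s) x -> cU (stage s) y -> cU (stage s') x -> cU (stage s') y ->
  (cR (stage s) x y <-> cR (stage s') x y).
Proof.
  intros H1 H2 H3 H4.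
  destruct (stage_ext (Nat.le_max_l s s')) as [_ [R1 _]].
  destruct (stage_ext (Nat.le_max_r s s')) as [_ [R2 _]].
  rewrite (R1 x y H1 H2), (R2 x y H3 H4). tauto.
Qed.

Lemma M_op s i (x : M) : cU (stage s) (proj1_sig x) -> proj1_sig (op M i x) = cf (stage s) i (proj1_sig x).
Proof. intros H. simpl. apply cf_stage; auto. apply Mst_spec. Qed.

Lemma M_rel s (x y : M) : cU (stage s) (proj1_sig x) -> cU (stage s) (proj1_sig y) ->
  (rel M x y <-> cR (stage s) (proj1_sig x) (proj1_sig y)).
Proof.
  intros Hx Hy. simpl. unfold Mrel. split.
  - intros [s' [H1 [H2 H3]]]. apply (cR_stage s' s _ _ H1 H2 Hx Hy); auto.
  - intros H; exists s; auto.
Qed.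

Lemma common (l : list M) : exists s, forall x, In x l -> cU (stage s) (proj1_sig x).
Proof.
  induction l as [|a l [s Hs]].
  - exists 0; simpl; tauto.
  - destruct (proj2_sig a) as [sa Ha]. exists (Nat.max s sa). intros x [<-|Hx].
    + apply U_mono with sa; auto. apply Nat.le_max_r.
    + apply U_mono with s; auto. apply Nat.le_max_l.
Qed.

Definition iota (s : nat) (x : TS (stage s)) : M :=
  exist _ (proj1_sig x) (ex_intro _ s (proj2_sig x)).

Lemma iota_emb s : embedding (iota s).
Proof.
  split; [|split].
  - intros x y E. apply sig_eq. exact (f_equal (@proj1_sig _ _) E).
  - intros x y. rewrite (M_rel s (iota s x) (iota s y)) by (simpl; apply proj2_sig). simpl. tauto.
  - intros i x. apply sig_eq. rewrite (M_op s) by (simpl; apply proj2_sig).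
    change (proj1_sig (op (TS (stage s)) i x) = cf (stage s) i (proj1_sig x)).
    rewrite (TS_op (proj1 (stage_inv s))). reflexivity.
Qed.

Lemma gen_in (l : list M) s : (forall x, In x l -> cU (stage s) (proj1_sig x)) ->
  forall x, generated l x -> cU (stage s) (proj1_sig x).
Proof.
  intros Hl x Hx. apply (Hx (fun y : M => cU (stage s) (proj1_sig y))); auto.
  intros i y Hy. rewrite (M_op s) by auto. apply (proj1 (stage_inv s)); auto.
Qed.

Lemma gen_K (l : list M) : K0 (gen_struct l) /\ finite_type (gen_struct l).
Proof.
  destruct (common l) as [s Hs].
  pose (g := (fun x : gen_struct l => exist _ (proj1_sig (proj1_sig x)) (gen_in s Hs (proj2_sig x)))
             : gen_struct l -> TS (stage s)).
  assert (Hg : embedding g).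
  { split; [|split].
    - intros x y E. apply sig_eqT, sig_eq. exact (f_equal (@proj1_sig _ _) E).
    - intros x y. simpl rel at 1. rewrite (M_rel s) by (apply (gen_in s Hs), proj2_sig). simpl. tauto.
    - intros i x. apply sig_eq.
      change (proj1_sig (op M i (proj1_sig x)) = proj1_sig (op (TS (stage s)) i (g x))).
      rewrite (TS_op (proj1 (stage_inv s))), (M_op s) by (apply (gen_in s Hs), proj2_sig).
      reflexivity. }
  split.
  - exact (K_emb Hg (proj2 (proj2 (stage_inv s)))).
  - destruct (proj1 (proj2 (stage_inv s))) as [L HL].
    apply (fin_inj (fun x : gen_struct l => proj1_sig (proj1_sig x)) L).
    + intros x y E. apply sig_eqT, sig_eq, E.
    + intros x. apply HL, (gen_in s Hs), proj2_sig.
Qed.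

Lemma EP (l : list M) (B : struct I) (e : gen_struct l -> B) :
  K0 B -> finite_type B -> embedding e ->
  exists h : B -> M, embedding h /\ forall x, h (e x) = proj1_sig x.
Proof.
  intros HKB HBfin He.
  destruct (common l) as [s0 Hs0].
  pose (cA := CS (fun n => exists m : M, proj1_sig m = n /\ generated l m)
                 (cR (stage s0)) (cf (stage s0))).
  assert (HcA : closed cA).
  { intros i n [m [<- Hm]]. exists (op M i m). split.
    - apply (M_op s0). apply (gen_in s0 Hs0 Hm).
    - apply generated_closed; auto. }
  pose (k := (fun x : TS cA => exist _ (choose (proj2_sig x)) (proj2 (choose_spec (proj2_sig x))))
             : TS cA -> gen_struct l).
  assert (Hkn : forall x, proj1_sig (proj1_sig (k x)) = proj1_sig x).
  { intro x. exact (proj1 (choose_spec (proj2_sig x))). }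
  assert (Hkin : forall x, cU (stage s0) (proj1_sig (proj1_sig (k x)))).
  { intro x. apply (gen_in s0 Hs0), proj2_sig. }
  assert (Hk : embedding k).
  { split; [|split].
    - intros x y E. apply sig_eq. rewrite <- Hkn, <- (Hkn y), E. reflexivity.
    - intros x y. change (cR (stage s0) (proj1_sig x) (proj1_sig y) <->
                          rel M (proj1_sig (k x)) (proj1_sig (k y))).
      rewrite (M_rel s0) by apply Hkin. rewrite !Hkn. tauto.
    - intros i x. apply sig_eqT, sig_eq.
      change (proj1_sig (proj1_sig (k (op (TS cA) i x))) =
              proj1_sig (op M i (proj1_sig (k x)))).
      rewrite Hkn, (TS_op HcA), (M_op s0) by apply Hkin. rewrite Hkn. reflexivity. }
  pose (h0 := fun x => e (k x)).
  assert (Hh0 : embedding h0) by exact (emb_comp Hk He).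
  destruct (proj1 (proj2 (stage_inv s0))) as [L0 HL0].
  destruct (bound_ex L0) as [b Hb].
  destruct (@recode cA B h0 b HcA HBfin Hh0) as [cB [j [HcB [HcBfin [Hext [Hj Hjh]]]]]].
  { intros n [m [<- Hm]]. apply Hb, HL0, (gen_in s0 Hs0 Hm). }
  destruct (proj2 (gen_K l)) as [LA HLA].
  pose (Sl := map (fun x : gen_struct l => proj1_sig (proj1_sig x)) LA).
  assert (HSl : forall n, In n Sl <-> cU cA n).
  { intro n. unfold Sl. rewrite in_map_iff. split.
    - intros [x [<- _]]. exists (proj1_sig x). split; auto. apply proj2_sig.
    - intros [m [<- Hm]]. exists (exist _ m Hm). split; auto. }
  destruct HcBfin as [LB HLB].
  pose (LV := filter (fun n => if EM (cU cB n) then true else false) LB).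
  assert (HLV : forall n, cU cB n <-> In n LV).
  { intro n. unfold LV. rewrite filter_In. destruct (EM (cU cB n)) as [p|p].
    - split; [intro; split; auto|tauto].
    - split; [tauto|intros [_ E]; discriminate]. }
  destruct (encode cB Sl LV HLV) as [t [Ht1 [HtU [HtR HtF]]]].
  assert (Hct : closed (interp t)).
  { intros i x Hx. apply HtU in Hx. rewrite HtF by auto. apply HtU, HcB, Hx. }
  assert (E1 : ext cB (interp t)).
  { split; [|split].
    - intros x Hx; apply HtU; auto.
    - intros x y Hx Hy. rewrite HtR; auto; tauto.
    - intros i x Hx. apply HtF; auto. }
  assert (E2 : ext (interp t) cB).
  { split; [|split].
    - intros x Hx; apply HtU; auto.
    - intros x y Hx Hy. apply HtU in Hx, Hy. rewrite HtR; auto; tauto.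
    - intros i x Hx. apply HtU in Hx. symmetry; apply HtF; auto. }
  destruct (ext_emb HcB E1) as [psi [Hpsi Hpsin]].
  destruct (ext_emb Hct E2) as [psi' [Hpsi' _]].
  assert (HKcB : K0 (TS cB)).
  { destruct (iso_inv Hj) as [g' [Hg' _]]. exact (K_emb Hg' HKB). }
  assert (Hvalid : valid (stage s0) t).
  { split; [apply stage_inv|]. split; auto. split.
    { exists LV. intros x Hx. apply HLV, HtU, Hx. }
    split; [exact (K_emb Hpsi' HKcB)|]. rewrite Ht1. split; [|split].
    - intros x Hx. apply HSl in Hx as Hx'. split.
      + destruct Hx' as [m [<- Hm]]. apply (gen_in s0 Hs0 Hm).
      + apply HtU. apply Hext, Hx'.
    - intros i x Hx. apply HSl in Hx. rewrite HtF by (apply Hext, Hx).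
      destruct Hext as [_ [_ HF]]. rewrite HF by auto. split; [|reflexivity].
      apply HSl, HcA, Hx.
    - intros x y Hx Hy. apply HSl in Hx, Hy.
      rewrite HtR by (apply Hext; auto).
      destruct Hext as [_ [HR _]]. rewrite <- HR by auto. simpl; tauto. }
  destruct (Htsk t) as [kk Hkk].
  pose (s := to_nat (kk, s0)).
  assert (Hs : s0 <= s) by (pose proof (to_nat_non_decreasing kk s0); unfold s; lia).
  assert (Hv : valid (stage s) t).
  { apply (valid_mono Hvalid); [apply stage_inv|apply stage_ext; auto]. }
  assert (Hr : realizes (stage (S s)) t).
  { simpl. unfold s at 2. rewrite cancel_of_to. simpl fst. rewrite Hkk. apply step_real; auto. }
  destruct Hr as [h' [Hh' Hh'fix]].
  exists (fun y => iota (S s) (h' (psi (j y)))).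
  split.
  - apply emb_comp; [|apply iota_emb]. apply emb_comp; [|auto]. apply emb_comp; auto. apply Hj.
  - intro x. apply sig_eq.
    assert (Hxa : cU cA (proj1_sig (proj1_sig x))).
    { exists (proj1_sig x). split; auto. apply proj2_sig. }
    pose (ya := exist _ (proj1_sig (proj1_sig x)) Hxa : TS cA).
    assert (Eya : k ya = x).
    { apply sig_eqT, sig_eq. rewrite Hkn. reflexivity. }
    rewrite <- Eya. change (e (k ya)) with (h0 ya).
    change (proj1_sig (h' (psi (j (h0 ya)))) = proj1_sig (proj1_sig (k ya))).
    rewrite Hh'fix.
    + rewrite Hpsin, Hjh, Hkn. reflexivity.
    + rewrite Hpsin, Hjh, Ht1. apply HSl. exact Hxa.
Qed.

Definition pi (Gr : M -> M -> Prop) : Prop :=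
  (forall x y y', Gr x y -> Gr x y' -> y = y') /\
  (forall x x' y, Gr x y -> Gr x' y -> x = x') /\
  (forall i x y, Gr x y -> Gr (op M i x) (op M i y)) /\
  (forall x y x' y', Gr x y -> Gr x' y' -> (rel M x x' <-> rel M y y')) /\
  (exists L, forall x y, Gr x y -> In x L) /\
  (exists L, forall x y, Gr x y -> In y L).

Definition flipR (Gr : M -> M -> Prop) : M -> M -> Prop := fun x y => Gr y x.

Lemma pi_flip Gr : pi Gr -> pi (flipR Gr).
Proof.
  unfold flipR. intros [Hf [Hi [Hc [Hr [[L1 H1] [L2 H2]]]]]].
  split; [|split; [|split; [|split; [|split]]]]; eauto.
  - intros x y x' y' A1 A2. rewrite (Hr _ _ _ _ A1 A2). tauto.
Qed.

Lemma gen_of_In (l : list M) x : In x l -> generated l x.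
Proof. intros H S _ HS. apply HS, H. Qed.

Lemma forth (Gr : M -> M -> Prop) : pi Gr -> forall x : M,
  exists Gr', pi Gr' /\ (forall a b, Gr a b -> Gr' a b) /\ exists y, Gr' x y.
Proof.
  intros [Hf [Hi [Hc [Hr [[L1 HL1] [L2 HL2]]]]]] x.
  pose (L2' := filter (fun y => if EM (exists a, Gr a y) then true else false) L2).
  assert (HL2' : forall y, In y L2' <-> exists a, Gr a y).
  { intro y. unfold L2'. rewrite filter_In. destruct (EM (exists a, Gr a y)) as [p|p].
    - split; [tauto|]. intros H; split; auto. destruct H as [a Ha]; eapply HL2; eauto.
    - split; [intros [_ E]; discriminate|tauto]. }
  assert (Hgen2 : forall y, generated L2' y -> exists a, Gr a y).
  { intros y Hy. apply (Hy (fun y => exists a, Gr a y)).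
    - intros i z [a Ha]. exists (op M i a). apply Hc; auto.
    - intros z Hz. apply HL2'; auto. }
  destruct (gen_K (x :: L1)) as [HKB HBfin].
  assert (Hin : forall (r : gen_struct L2'), generated (x :: L1) (choose (Hgen2 _ (proj2_sig r)))).
  { intro r. apply gen_of_In. right. eapply HL1. exact (choose_spec (Hgen2 _ (proj2_sig r))). }
  pose (e := (fun r => exist _ (choose (Hgen2 _ (proj2_sig r))) (Hin r))
             : gen_struct L2' -> gen_struct (x :: L1)).
  assert (Hech : forall r, Gr (proj1_sig (e r)) (proj1_sig r)).
  { intro r. exact (choose_spec (Hgen2 _ (proj2_sig r))). }
  assert (He : embedding e).
  { split; [|split].
    - intros r1 r2 E. apply sig_eqT. apply (Hf (proj1_sig (e r1))).
      apply Hech. rewrite E. apply Hech.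
    - intros r1 r2. change (rel M (proj1_sig r1) (proj1_sig r2) <->
                            rel M (proj1_sig (e r1)) (proj1_sig (e r2))).
      rewrite (Hr _ _ _ _ (Hech r1) (Hech r2)). tauto.
    - intros i r. apply sig_eqT.
      change (proj1_sig (e (op (gen_struct L2') i r)) = op M i (proj1_sig (e r))).
      apply (Hi _ _ (op M i (proj1_sig r))).
      + apply Hech.
      + apply Hc, Hech. }
  destruct (EP HKB HBfin He) as [h [Hh Hhe]].
  exists (fun a b => exists p : generated (x :: L1) a, h (exist _ a p) = b).
  split; [split; [|split; [|split; [|split; [|split]]]]|split].
  - intros a y y' [p Hp] [p' Hp']. rewrite (proof_irrelevance _ p p') in Hp. congruence.
  - intros a a' y [p Hp] [p' Hp']. rewrite <- Hp' in Hp. apply (proj1 Hh) in Hp.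
    exact (f_equal (@proj1_sig _ _) Hp).
  - intros i a y [p Hp]. exists (@generated_closed I M (x :: L1) i a p). rewrite <- Hp.
    rewrite <- (proj2 (proj2 Hh)). f_equal.
  - intros a y a' y' [p <-] [p' <-].
    rewrite <- (proj1 (proj2 Hh)). simpl. tauto.
  - destruct HBfin as [LB HLB]. exists (map (fun z : gen_struct (x :: L1) => proj1_sig z) LB).
    intros a y [p _]. apply in_map_iff. exists (exist _ a p); auto.
  - destruct HBfin as [LB HLB]. exists (map h LB).
    intros a y [p <-]. apply in_map; auto.
  - intros a b Hab.
    assert (Hb : generated L2' b) by (apply gen_of_In, HL2'; eauto).
    pose (r := exist _ b Hb : gen_struct L2').
    assert (Ea : proj1_sig (e r) = a) by (apply (Hi _ _ b); [apply (Hech r)|exact Hab]).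
    exists (@gen_of_In (x :: L1) a (in_cons x a L1 (HL1 a b Hab))).
    match goal with |- h (exist _ a ?p) = b =>
      rewrite (@sig_eqT M (generated (x :: L1)) (exist _ a p) (e r)) by (simpl; auto) end.
    rewrite Hhe. reflexivity.
  - exists (h (exist _ x (@gen_of_In (x :: L1) x (in_eq x L1)))). eexists; reflexivity.
Qed.

Definition fstep (Gr : M -> M -> Prop) (x : M) : M -> M -> Prop :=
  match EM (pi Gr) with
  | left H => choose (forth H x)
  | right _ => Gr
  end.

Lemma fstep_spec Gr x : pi Gr ->
  pi (fstep Gr x) /\ (forall a b, Gr a b -> fstep Gr x a b) /\ exists y, fstep Gr x x y.
Proof.
  intro H. unfold fstep. destruct (EM _) as [H'|H']; [|contradiction].
  exact (choose_spec (forth H' x)).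
Qed.

Definition bstep (Gr : M -> M -> Prop) (x : M) : M -> M -> Prop :=
  flipR (fstep (flipR Gr) x).

Lemma bstep_spec Gr x : pi Gr ->
  pi (bstep Gr x) /\ (forall a b, Gr a b -> bstep Gr x a b) /\ exists y, bstep Gr x y x.
Proof.
  intro H. destruct (fstep_spec x (pi_flip H)) as [H1 [H2 H3]].
  split; [apply pi_flip; auto|split; auto].
  intros a b Hab. apply H2. exact Hab.
Qed.

Definition enum (n : nat) : option M :=
  match EM (inM n) with left p => Some (exist _ n p) | right _ => None end.

Lemma enum_spec (x : M) : enum (proj1_sig x) = Some x.
Proof.
  destruct x as [n q]. unfold enum. simpl. destruct (EM (inM n)) as [p|m].
  - rewrite (proof_irrelevance _ p q). reflexivity.
  - contradiction.
Qed.

Fixpoint chain (G0 : M -> M -> Prop) (k : nat) : M -> M -> Prop :=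
  match k with
  | 0 => G0
  | S k' => match enum k' with
            | Some x => bstep (fstep (chain G0 k') x) x
            | None => chain G0 k'
            end
  end.

Lemma chain_spec G0 k : pi G0 -> pi (chain G0 k) /\ (forall a b, chain G0 k a b -> chain G0 (S k) a b) /\
  (forall x, enum k = Some x -> (exists y, chain G0 (S k) x y) /\ (exists y, chain G0 (S k) y x)).
Proof.
  intro H0. induction k as [|k IH].
  - simpl. split; auto. destruct (enum 0) as [x|] eqn:E.
    + destruct (fstep_spec x H0) as [F1 [F2 [y F3]]]. destruct (bstep_spec x F1) as [B1 [B2 [z B3]]].
      split; auto. intros x' E'. injection E'; intros <-. split; eauto.
    + split; auto. intros x' E'; discriminate.
  - destruct IH as [P _]. simpl.
    assert (P' : pi (chain G0 (S k))).
    { simpl. destruct (enum k) as [x|].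
      - apply bstep_spec, fstep_spec; auto.
      - auto. }
    simpl in P'. split; auto.
    destruct (enum (S k)) as [x|] eqn:E.
    + destruct (fstep_spec x P') as [F1 [F2 [y F3]]]. destruct (bstep_spec x F1) as [B1 [B2 [z B3]]].
      split; auto. intros x' E'. injection E'; intros <-. split; eauto.
    + split; auto. intros x' E'; discriminate.
Qed.

Section BF.
Variable G0 : M -> M -> Prop.
Hypothesis HG0 : pi G0.

Lemma chain_pi k : pi (chain G0 k).
Proof. apply chain_spec; auto. Qed.

Lemma chain_mono k k' : k <= k' -> forall a b, chain G0 k a b -> chain G0 k' a b.
Proof.
  induction 1; auto. intros a b H'. destruct (@chain_spec G0 m HG0) as [_ [Hs _]]. auto.
Qed.

Definition Ginf (a b : M) : Prop := exists k, chain G0 k a b.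

Lemma Ginf2 a b a' b' : Ginf a b -> Ginf a' b' -> exists k, chain G0 k a b /\ chain G0 k a' b'.
Proof.
  intros [k1 H1] [k2 H2]. exists (Nat.max k1 k2). split.
  - apply (chain_mono (Nat.le_max_l k1 k2)); auto.
  - apply (chain_mono (Nat.le_max_r k1 k2)); auto.
Qed.

Lemma Ginf_tot x : exists y, Ginf x y.
Proof.
  destruct (@chain_spec G0 (proj1_sig x) HG0) as [_ [_ H]].
  destruct (H x (enum_spec x)) as [[y Hy] _]. exists y, (S (proj1_sig x)); auto.
Qed.

Lemma Ginf_sur y : exists x, Ginf x y.
Proof.
  destruct (@chain_spec G0 (proj1_sig y) HG0) as [_ [_ H]].
  destruct (H y (enum_spec y)) as [_ [x Hx]]. exists x, (S (proj1_sig y)); auto.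
Qed.

Lemma Ginf_fun x y y' : Ginf x y -> Ginf x y' -> y = y'.
Proof.
  intros H1 H2. destruct (Ginf2 H1 H2) as [k [A1 A2]].
  exact (proj1 (chain_pi k) _ _ _ A1 A2).
Qed.

Definition sigma (x : M) : M := choose (Ginf_tot x).
Lemma sigma_spec x : Ginf x (sigma x).
Proof. exact (choose_spec (Ginf_tot x)). Qed.

Lemma sigma_iso : isomorphism sigma.
Proof.
  split; [split; [|split]|].
  - intros x x' E. destruct (Ginf2 (sigma_spec x) (sigma_spec x')) as [k [A1 A2]].
    rewrite E in A1. exact (proj1 (proj2 (chain_pi k)) _ _ _ A1 A2).
  - intros x x'. destruct (Ginf2 (sigma_spec x) (sigma_spec x')) as [k [A1 A2]].
    exact (proj1 (proj2 (proj2 (proj2 (chain_pi k)))) _ _ _ _ A1 A2).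
  - intros i x. apply Ginf_fun with (op M i x).
    + apply sigma_spec.
    + destruct (sigma_spec x) as [k Hk]. exists k.
      apply (proj1 (proj2 (proj2 (chain_pi k)))); auto.
  - intros y. destruct (Ginf_sur y) as [x Hx]. exists x.
    apply Ginf_fun with x; auto. apply sigma_spec.
Qed.

Lemma sigma_ext a b : G0 a b -> sigma a = b.
Proof. intro H. apply Ginf_fun with a. apply sigma_spec. exists 0; exact H. Qed.
End BF.

Lemma M_UH : ultrahomogeneous M.
Proof.
  intros l1 l2 phi Hphi.
  pose (G0 := fun a b => exists p : generated l1 a, proj1_sig (phi (exist _ a p)) = b).
  assert (HG0 : pi G0).
  { destruct Hphi as [[Pi [Pr Po]] Ps].
    split; [|split; [|split; [|split; [|split]]]].
    - intros a y y' [p Hp] [p' Hp']. rewrite (proof_irrelevance _ p p') in Hp. congruence.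
    - intros a a' y [p Hp] [p' Hp']. rewrite <- Hp' in Hp. apply sig_eqT, Pi in Hp.
      exact (f_equal (@proj1_sig _ _) Hp).
    - intros i a y [p <-]. exists (@generated_closed I M l1 i a p).
      change (exist _ (op M i a) (@generated_closed I M l1 i a p)) with (op (gen_struct l1) i (exist _ a p)).
      rewrite Po. reflexivity.
    - intros a y a' y' [p <-] [p' <-].
      change (rel (gen_struct l1) (exist _ a p) (exist _ a' p') <->
              rel (gen_struct l2) (phi (exist _ a p)) (phi (exist _ a' p'))).
      apply Pr.
    - destruct (proj2 (gen_K l1)) as [L HL]. exists (map (fun z : gen_struct l1 => proj1_sig z) L).
      intros a y [p _]. apply in_map_iff. exists (exist _ a p); auto.
    - destruct (proj2 (gen_K l2)) as [L HL]. exists (map (fun z : gen_struct l2 => proj1_sig z) L).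
      intros a y [p <-]. apply in_map; auto. }
  exists (sigma HG0). split.
  - apply sigma_iso.
  - intros [a p]. apply sigma_ext. exists p. reflexivity.
Qed.

Theorem fraisse_exists : exists M0, fraisse_limit (finite_members K0) M0.
Proof.
  exists M. split; [|split].
  - exists (fun x : M => proj1_sig x). intros x y; apply sig_eq.
  - apply M_UH.
  - split.
    + intros l. exists (gen_struct l). split; [apply gen_K|].
      exists (fun x => x). split; [split; [|split]|].
      * auto.
      * intros; tauto.
      * auto.
      * intros y; exists y; auto.
    + intros A [HKA HAfin].
      assert (Hno : forall x : gen_struct ([] : list M), False).
      { intros [x Hx]. apply (Hx (fun _ => False)); [intros i y []|intros y []]. }
      pose (e := (fun x => match Hno x with end) : gen_struct ([] : list M) -> A).
      assert (He : embedding e) by (split; [|split]; intros; destruct (Hno x)).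
      destruct (EP HKA HAfin He) as [h [Hh _]]. exists h; exact Hh.
Qed.

End Fraisse.

Section Pull.
Variable I : Type.
Variables A B : struct I.
Variable h : A -> B.
Hypothesis Hh : embedding h.
Let hi : forall x y, h x = h y -> x = y := proj1 Hh.
Let hr : forall x y, rel A x y <-> rel B (h x) (h y) := proj1 (proj2 Hh).
Let ho : forall i x, h (op A i x) = op B i (h x) := proj2 (proj2 Hh).

Lemma pull_refl : (forall y, rel B y y) -> forall x, rel A x x.
Proof. intros H x. apply hr, H. Qed.
Lemma pull_irrefl : (forall y, ~ rel B y y) -> forall x, ~ rel A x x.
Proof. intros H x Hx. apply hr in Hx. exact (H _ Hx). Qed.
Lemma pull_sym : (forall x y, rel B x y -> rel B y x) -> forall x y, rel A x y -> rel A y x.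
Proof. intros H x y Hx. apply hr. apply H, hr, Hx. Qed.
Lemma pull_trans : (forall x y z, rel B x y -> rel B y z -> rel B x z) ->
  forall x y z, rel A x y -> rel A y z -> rel A x z.
Proof. intros H x y z H1 H2. apply hr. apply hr in H1, H2. eauto. Qed.
Lemma pull_antisym : (forall x y, rel B x y -> rel B y x -> x = y) ->
  forall x y, rel A x y -> rel A y x -> x = y.
Proof. intros H x y H1 H2. apply hr in H1, H2. apply hi, H; auto. Qed.
Lemma pull_pres i : (forall x y, rel B x y -> rel B (op B i x) (op B i y)) ->
  forall x y, rel A x y -> rel A (op A i x) (op A i y).
Proof. intros H x y Hx. apply hr. rewrite !ho. apply H, hr, Hx. Qed.
Lemma pull_rev i : (forall x y, rel B x y -> rel B (op B i y) (op B i x)) ->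
  forall x y, rel A x y -> rel A (op A i y) (op A i x).
Proof. intros H x y Hx. apply hr. rewrite !ho. apply H, hr, Hx. Qed.
Lemma pull_strict x y : strict (rel A) x y <-> strict (rel B) (h x) (h y).
Proof.
  unfold strict. rewrite hr. split; intros [H1 H2]; split; auto;
  intro E; first [apply H2; rewrite E; reflexivity | apply H2, hi, E].
Qed.
Lemma pull_spres i : (forall x y, strict (rel B) x y -> strict (rel B) (op B i x) (op B i y)) ->
  forall x y, strict (rel A) x y -> strict (rel A) (op A i x) (op A i y).
Proof. intros H x y Hx. apply pull_strict. rewrite !ho. apply H, pull_strict, Hx. Qed.
Lemma pull_srev i : (forall x y, strict (rel B) x y -> strict (rel B) (op B i y) (op B i x)) ->
  forall x y, strict (rel A) x y -> strict (rel A) (op A i y) (op A i x).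
Proof. intros H x y Hx. apply pull_strict. rewrite !ho. apply H, pull_strict, Hx. Qed.
End Pull.

Lemma class1_pull k F G (A B : struct (F + G)) (h : A -> B) :
  embedding h -> class1 k F G B -> class1 k F G A.
Proof.
  intros Hh [RB [FB GB]]. split; [|split].
  - destruct k; simpl in *.
    + destruct RB as [? [? ?]]. split; [|split].
      eapply pull_refl; eauto. eapply pull_antisym; eauto. eapply pull_trans; eauto.
    + destruct RB as [? ?]. split. eapply pull_refl; eauto. eapply pull_trans; eauto.
    + destruct RB as [? ?]. split. eapply pull_sym; eauto. eapply pull_irrefl; eauto.
    + eapply pull_irrefl; eauto.
    + destruct RB as [? [? ?]]. split; [|split].
      eapply pull_refl; eauto. eapply pull_sym; eauto. eapply pull_trans; eauto.
    + eapply pull_trans; eauto.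
    + destruct RB as [? ?]. split. eapply pull_sym; eauto. eapply pull_refl; eauto.
  - intros f. eapply pull_pres; eauto.
  - intros g. eapply pull_rev; eauto.
Qed.

Lemma class2_pull F1 F2 F3 F4 (A B : struct (((F1 + F2) + F3) + F4)) (h : A -> B) :
  embedding h -> class2 F1 F2 F3 F4 B -> class2 F1 F2 F3 F4 A.
Proof.
  intros Hh [[R1 [R2 R3]] [P1 [P2 [P3 P4]]]].
  split; [split; [|split]|split; [|split; [|split]]].
  - eapply pull_refl; eauto.
  - eapply pull_antisym; eauto.
  - eapply pull_trans; eauto.
  - intros f. eapply pull_pres; eauto.
  - intros f. eapply pull_rev; eauto.
  - intros f. eapply pull_spres; eauto.
  - intros f. eapply pull_srev; eauto.
Qed.

Lemma finite_sum X Y : finite_type X -> finite_type Y -> finite_type (X + Y).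
Proof.
  intros [LX HX] [LY HY]. exists (map inl LX ++ map inr LY).
  intros [x|y]; apply in_or_app; [left|right]; apply in_map; auto.
Qed.

Theorem corollary2p3 :
  (forall (k : relkind) (F G : Type),
     superSAP (class1 k F G) /\ JEP (class1 k F G) /\
     (finite_type F -> finite_type G ->
        exists M, fraisse_limit (finite_members (class1 k F G)) M)) /\
  (forall F1 F2 F3 F4 : Type,
     superSAP (class2 F1 F2 F3 F4) /\ JEP (class2 F1 F2 F3 F4) /\
     (finite_type F1 -> finite_type F2 -> finite_type F3 -> finite_type F4 ->
        exists M, fraisse_limit (finite_members (class2 F1 F2 F3 F4)) M)).
Proof.
  destruct part_superSAP_JEP as [P1 P2]. split.
  - intros k F G. destruct (P1 k F G) as [S J]. split; [exact S|split; [exact J|]].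
    intros HF HG. apply fraisse_exists.
    + apply finite_sum; auto.
    + intros A B h Hh KB. exact (class1_pull Hh KB).
    + intros A B C eA eB KA KB HeA HeB FA FB.
      apply (@AP_of _ _ (mode_of k)); auto.
      * intros A' KA'; apply class1_trans; auto.
      * intros; apply class1_D; auto.
    + apply class1_empty.
  - intros F1 F2 F3 F4. destruct (P2 F1 F2 F3 F4) as [S J]. split; [exact S|split; [exact J|]].
    intros H1 H2 H3 H4. apply fraisse_exists.
    + repeat apply finite_sum; auto.
    + intros A B h Hh KB. exact (class2_pull Hh KB).
    + intros A B C eA eB KA KB HeA HeB FA FB.
      apply (@AP_of _ _ true); auto.
      * intros A' [[_ [_ T]] _] _; exact T.
      * intros; apply class2_D; auto.
    + apply class2_empty.
Qed.
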